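(* Let $G=(V,E)$ be a distance graph in $\mathbb{R}^d$ with $|V|=n$. Suppose there are $k\in\mathbb{N}$ and $\nu_0\in(0,1)$ such that every induced subgraph $G'=(V',E')$ of $G$ with $|V'|\ge[\nu_0 n]$ satisfies $\chi(G')>k$. Then for every family of Lebesgue measurable sets $S_1,\dots,S_k\subseteq\mathbb{R}^d$ such that $S=S_1\cup\dots\cup S_k$ has upper density $\nu\ge\nu_0$, and for every $a>0$, there exist an index $i\in\{1,\dots,k\}$ and points $\mathbf{x},\mathbf{y}\in S_i$ with $|\mathbf{x}-\mathbf{y}|=a$.
   Context: A distance graph in $\mathbb{R}^d$ is a finite graph $G=(V,E)$ with $V\subset\mathbb{R}^d$, $|V|<\infty$, and $E\subseteq\{\{\mathbf{x},\mathbf{y}\}\subseteq V:\ |\mathbf{x}-\mathbf{y}|=1\}$, where $|\cdot|$ is the Euclidean norm. $\chi$ denotes chromatic number, $[x]$ the integer part. The upper density of a measurable set $S\subseteq\mathbb{R}^d$ is $\limsup_{R\to\infty}\frac{\lambda(S\cap B_R)}{\lambda(B_R)}$, where $\lambda$ is Lebesgue measure and $B_R$ is the ball of radius $R$ centered at the origin. *)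

(* Defs.v *)
From HB Require Import structures.
From mathcomp Require Import all_boot all_order all_algebra.
From mathcomp Require Import finmap.
From mathcomp Require Import all_classical all_reals all_analysis.
Set Implicit Arguments. Unset Strict Implicit. Unset Printing Implicit Defensive.
Import Order.TTheory GRing.Theory Num.Theory.
Import numFieldNormedType.Exports numFieldTopology.Exports.
Local Open Scope classical_set_scope.
Local Open Scope ring_scope.

Section Defs.
Variables (R : realType) (d : nat).
Local Notation pt := 'rV[R]_d.

Definition eucl_norm (x : pt) : R := Num.sqrt (\sum_(i < d) x ord0 i ^+ 2).
Definition eucl_dist (x y : pt) : R := eucl_norm (x - y).

Definition eball (r : R) : set pt := [set x | eucl_norm x <= r].

Definition box (a b : pt) : set pt :=
  [set x | forall i : 'I_d, a ord0 i <= x ord0 i < b ord0 i].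
Definition box_vol (a b : pt) : R := \prod_(i < d) Num.max 0 (b ord0 i - a ord0 i).

Definition leb_outer (A : set pt) : \bar R :=
  ereal_inf [set (\sum_(0 <= k <oo) (box_vol (ab k).1 (ab k).2)%:E)%E
            | ab in [set ab : nat -> pt * pt |
                     A `<=` \bigcup_k box (ab k).1 (ab k).2]].

Definition leb_measurable (A : set pt) : Prop :=
  forall X : set pt, leb_outer X = (leb_outer (X `&` A) + leb_outer (X `&` ~` A))%E.

Definition upper_density (S : set pt) : \bar R :=
  limf_esup
    (fun r : (R : topologicalType) => (fine (leb_outer (S `&` eball r)) / fine (leb_outer (eball r)))%:E)
    (pinfty_nbhs R).

Definition distance_graph (V : {fset pt}) (E : pt -> pt -> Prop) : Prop :=
  (forall x y, E x y -> E y x) /\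
  (forall x y, E x y -> [/\ x \in V, y \in V & eucl_dist x y = 1]).
End Defs.

Definition colorable (T : choiceType) (V : {fset T}) (E : T -> T -> Prop) (c : nat) : Prop :=
  exists f : T -> nat, (forall x, x \in V -> (f x < c)%N) /\
    (forall x y, x \in V -> y \in V -> x <> y -> E x y -> f x <> f y).

Lemma colorable_ex (T : choiceType) (V : {fset T}) (E : T -> T -> Prop) :
  exists c, `[< colorable V E c >].
Proof.
exists (size (V : seq T)); apply/asboolP.
exists (fun x => index x V); split; first by move=> x; rewrite index_mem.
by move=> x y xV yV xy _ /(congr1 (nth x V)); rewrite !nth_index.
Qed.

Definition chromatic_number (T : choiceType) (V : {fset T}) (E : T -> T -> Prop) : nat :=
  ex_minn (colorable_ex V E).

(* Main.v *)
Require Import Defs.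
From HB Require Import structures.
From mathcomp Require Import all_boot all_order all_algebra.
From mathcomp Require Import finmap.
From mathcomp Require Import all_classical all_reals all_analysis.
From mathcomp Require Import ring lra zify.
Import Order.TTheory GRing.Theory Num.Theory.
Import numFieldNormedType.Exports numFieldTopology.Exports.
Local Open Scope classical_set_scope.
Local Open Scope ring_scope.

Set Implicit Arguments. Unset Strict Implicit. Unset Printing Implicit Defensive.


Section Geo.
Variables (R : realType) (d : nat).
Local Notation pt := 'rV[R]_d.

Lemma CS (f g : 'I_d -> R) :
  (\sum_i f i * g i) ^+ 2 <= (\sum_i f i ^+ 2) * (\sum_i g i ^+ 2).
Proof.
set X := \sum_i f i ^+ 2; set Y := \sum_i g i ^+ 2; set P := \sum_i f i * g i.
have Y0 : 0 <= Y by apply: sumr_ge0 => i _; exact: sqr_ge0.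
have key : 0 <= Y * (X * Y - P ^+ 2).
  have -> : Y * (X * Y - P ^+ 2) = \sum_i (Y * f i - P * g i) ^+ 2.
    have h : forall i, (Y * f i - P * g i) ^+ 2 =
      Y ^+ 2 * f i ^+ 2 - (2 * Y * P) * (f i * g i) + P ^+ 2 * g i ^+ 2.
      by move=> i; ring.
    rewrite (eq_bigr _ (fun i _ => h i)) big_split sumrB /= -!mulr_sumr.
    rewrite -/X -/Y -/P; ring.
  by apply: sumr_ge0 => i _; exact: sqr_ge0.
have [Ypos|] := ltP 0 Y.
  by rewrite -subr_ge0; rewrite pmulr_rge0 // in key.
move=> Yle; have Yeq : Y = 0 by apply/eqP; rewrite eq_le Yle Y0.
have g0 : forall i, g i = 0.
  move=> i; have /psumr_eq0P h := Yeq.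
  by apply/eqP; rewrite -sqrf_eq0; apply/eqP; apply: h => // j _; exact: sqr_ge0.
have -> : P = 0 by rewrite /P big1 // => i _; rewrite g0 mulr0.
by rewrite expr0n /= mulr_ge0 // sumr_ge0 // => i _; exact: sqr_ge0.
Qed.

Lemma norm_ge0 (x : pt) : 0 <= eucl_norm x.
Proof. exact: sqrtr_ge0. Qed.

Lemma normZ (c : R) (x : pt) : eucl_norm (c *: x) = `|c| * eucl_norm x.
Proof.
rewrite /eucl_norm.
have -> : \sum_(i < d) (c *: x) ord0 i ^+ 2 = c ^+ 2 * \sum_(i < d) x ord0 i ^+ 2.
  by rewrite mulr_sumr; apply: eq_bigr => i _; rewrite mxE exprMn.
by rewrite sqrtrM ?sqr_ge0 // sqrtr_sqr.
Qed.

Lemma normD (x y : pt) : eucl_norm (x + y) <= eucl_norm x + eucl_norm y.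
Proof.
rewrite /eucl_norm.
set X := \sum_i x ord0 i ^+ 2; set Y := \sum_i y ord0 i ^+ 2.
set P := \sum_i x ord0 i * y ord0 i.
have X0 : 0 <= X by apply: sumr_ge0 => i _; exact: sqr_ge0.
have Y0 : 0 <= Y by apply: sumr_ge0 => i _; exact: sqr_ge0.
have -> : \sum_(i < d) (x + y) ord0 i ^+ 2 = X + 2 * P + Y.
  have h : forall i : 'I_d, (x + y) ord0 i ^+ 2 =
     x ord0 i ^+ 2 + 2 * (x ord0 i * y ord0 i) + y ord0 i ^+ 2.
    by move=> i; rewrite mxE; ring.
  by rewrite (eq_bigr _ (fun i _ => h i)) !big_split /= -mulr_sumr.
have PXY : P <= Num.sqrt X * Num.sqrt Y.
  rewrite -sqrtrM // (le_trans (ler_norm P)) // -sqrtr_sqr.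
  by rewrite ler_sqrt ?mulr_ge0 // CS.
have s0 : 0 <= Num.sqrt X + Num.sqrt Y by rewrite addr_ge0 ?sqrtr_ge0.
rewrite -(ger0_norm s0) -sqrtr_sqr ler_sqrt ?sqr_ge0 //.
rewrite sqrrD !sqr_sqrtr //.
lra.
Qed.

End Geo.



Section Outer.
Variables (R : realType) (d : nat).
Local Notation pt := 'rV[R]_d.
Local Notation lo := (@leb_outer R d).

Lemma box_vol_ge0 (a b : pt) : 0 <= box_vol a b.
Proof. by apply: prodr_ge0 => i _; rewrite le_max lexx. Qed.

Lemma lo_ge0 (A : set pt) : (0 <= lo A)%E.
Proof.
apply: le_ereal_inf_tmp => _ [ab _ <-]; apply: nneseries_ge0 => n _ _.
by rewrite lee_fin box_vol_ge0.
Qed.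

Lemma lo_mono (A B : set pt) : A `<=` B -> (lo A <= lo B)%E.
Proof.
move=> AB; apply: ereal_inf_le_tmp => _ [ab hab <-]; exists ab => //.
exact: subset_trans hab.
Qed.

Lemma lo_set0 : (0 < d)%N -> lo set0 = 0%E.
Proof.
move=> d0; apply/eqP; rewrite eq_le lo_ge0 andbT; apply: ge_ereal_inf.
exists 0%E => //; exists (fun _ => (0, 0)) => //.
apply: eseries0 => i _ _ /=; congr (_%:E).
rewrite /box_vol (bigD1 (Ordinal d0)) //= subrr maxxx mul0r //.
Qed.

Definition shft (t : pt) (A : set pt) : set pt := [set x | A (x - t)].
Definition scl (s : R) (A : set pt) : set pt := [set x | A (s^-1 *: x)].

Lemma lo_shift_le t A : (lo (shft t A) <= lo A)%E.
Proof.
apply: ereal_inf_le_tmp => _ [ab hab <-].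
exists (fun k => ((ab k).1 + t, (ab k).2 + t)).
  move=> x /= /hab [k _ /= hk]; exists k => //= i.
  have := hk i; rewrite !mxE => /andP [h1 h2]; apply/andP; split; lra.
congr (limn _); apply/funext => n; apply: eq_bigr => k _; congr (_%:E).
by apply: eq_bigr => i _ /=; rewrite !mxE; congr (Num.max _ _); ring.
Qed.

Lemma shiftK t A : shft (- t) (shft t A) = A.
Proof. by apply/funext => x; rewrite /shft /= !opprK ?addrK ?subrK. Qed.
Lemma shiftKN t A : shft t (shft (- t) A) = A.
Proof. by apply/funext => x; rewrite /shft /= !opprK ?addrK ?subrK. Qed.

Lemma lo_shift t A : lo (shft t A) = lo A.
Proof.
apply/eqP; rewrite eq_le lo_shift_le /=.
by rewrite -{1}(shiftK t A) lo_shift_le.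
Qed.

Lemma meas_shift t A : leb_measurable A -> leb_measurable (shft t A).
Proof.
move=> mA X; rewrite -(lo_shift (- t) X) (mA (shft (- t) X)).
have E1 : shft (- t) X `&` A = shft (- t) (X `&` shft t A).
  by apply/funext => x; rewrite /shft /= !opprK ?addrK ?subrK.
have E2 : shft (- t) X `&` ~` A = shft (- t) (X `&` ~` shft t A).
  by apply/funext => x; rewrite /shft /= !opprK ?addrK ?subrK.
by rewrite E1 E2 !lo_shift.
Qed.

End Outer.



Section Scale.
Variables (R : realType) (d : nat).
Local Notation pt := 'rV[R]_d.
Local Notation lo := (@leb_outer R d).

Lemma lo_scl (s : R) (A : set pt) : 0 < s -> (lo (scl s A) <= (s ^+ d)%:E * lo A)%E.
Proof.
move=> s0; have sd0 : 0 < s ^+ d by rewrite exprn_gt0.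
rewrite -lee_pdivrMl //; apply: le_ereal_inf_tmp => _ [ab hab <-].
rewrite lee_pdivrMl // -nneseriesZl; last by move=> i _; rewrite lee_fin box_vol_ge0.
apply: ge_ereal_inf; exists (\sum_(0 <= k <oo) (box_vol (s *: (ab k).1) (s *: (ab k).2))%:E)%E => //.
  exists (fun k => (s *: (ab k).1, s *: (ab k).2)) => //.
  move=> x /= /hab [k _ /= hk]; exists k => //= i.
  have := hk i; rewrite !mxE => /andP [h1 h2].
  rewrite -ler_pdivlMl // -ltr_pdivrMl //; by rewrite h1 h2.
rewrite le_eqVlt; apply/orP; left; apply/eqP. congr (limn _); apply/funext => n; apply: eq_bigr => k _; rewrite -EFinM; congr (_%:E).
have -> : s ^+ d = \prod_(i < d) s by rewrite prodr_const card_ord.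
rewrite /box_vol -big_split /=.
by apply: eq_bigr => i _; rewrite !mxE -mulrBr maxr_pMr ?ltW // mulr0.
Qed.

Lemma eball_scl (s r : R) : 0 < s -> @eball R d (s * r) = scl s (@eball R d r).
Proof.
move=> s0; apply/funext => x; apply/propext; rewrite /eball /scl /=.
rewrite normZ ger0_norm; last by rewrite invr_ge0 ltW.
by rewrite ler_pdivrMl.
Qed.

End Scale.



Section Count.
Variables (R : realType) (d : nat).
Local Notation pt := 'rV[R]_d.
Local Notation lo := (@leb_outer R d).

Definition Ul (l : seq (set pt)) : set pt := foldr setU set0 l.
Definition cnt (L : seq (seq (set pt))) (x : pt) : nat :=
  count (fun l => `[< Ul l x >]) L.

Lemma sum_lo_ge0 (L : seq (seq (set pt))) (F : seq (set pt) -> set pt) :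
  (0 <= \sum_(l <- L) lo (F l))%E.
Proof. by apply: sume_ge0 => l _; exact: lo_ge0. Qed.

Lemma counting_lemma (h0 : lo set0 = 0%E) n : forall L X k,
  (sumn (map size L) + size L < n)%N ->
  (forall l A, List.In l L -> List.In A l -> leb_measurable A) ->
  (forall x, X x -> (cnt L x <= k)%N) ->
  (\sum_(l <- L) lo (X `&` Ul l) <= k%:R%:E * lo X)%E.
Proof.
elim: n => [|n IH] L X k //.
case: L => [|l L'] hn hm hc.
  by rewrite big_nil mule_ge0 // ?lee_fin ?ler0n // lo_ge0.
case: l hn hm hc => [|A l'] hn hm hc.
  rewrite big_cons /Ul /= setI0 h0 add0e; apply: IH => //=.
  - by move: hn => /=; lia.
  - by move=> l B hl hB; apply: (hm l B) => //=; right.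
  - by move=> x Xx; have := hc x Xx; rewrite /cnt /=; lia.
have mA : leb_measurable A by apply: (hm (A :: l') A); left.
have split_t : forall l0, lo (X `&` Ul l0) =
   (lo ((X `&` A) `&` Ul l0) + lo ((X `&` ~` A) `&` Ul l0))%E.
  move=> l0; rewrite (mA (X `&` Ul l0)); congr (lo _ + lo _)%E;
  by apply/funext => x; apply/propext => /=; tauto.
rewrite (eq_bigr _ (fun l0 _ => split_t l0)) big_split /=.
have -> : (k%:R%:E * lo X = k%:R%:E * lo (X `&` A) + k%:R%:E * lo (X `&` ~` A))%E.
  by rewrite (mA X) ge0_muleDr // lo_ge0.
apply: leeD.
- rewrite big_cons.
  have -> : (X `&` A) `&` Ul (A :: l') = X `&` A.
    by apply/funext => x; apply/propext => /=; tauto.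
  have [[x [Xx Ax]]|nXA] := pselect (exists x, (X `&` A) x).
    move: (hc x Xx); rewrite /cnt /= asboolT; last by left.
    case: k hc => [|k] hc //= hk.
    rewrite -natr1 EFinD ge0_muleDl ?lee_fin ?ler0n // mul1e addeC leeD2r //.
    apply: IH.
    + by move: hn => /=; lia.
    + by move=> l B hl hB; apply: (hm l B) => //=; right.
    + move=> y [Xy Ay]; have := hc y Xy; rewrite /cnt /= asboolT //; last by left.
  have E0 : X `&` A = set0.
    by apply/funext => y; apply/propext; split => // hy; apply: nXA; exists y.
  rewrite E0 h0 mule0 add0e big1 // => l0 _.
  by rewrite set0I h0.
- rewrite big_cons.
  have -> : (X `&` ~` A) `&` Ul (A :: l') = (X `&` ~` A) `&` Ul l'.
    by apply/funext => x; apply/propext => /=; tauto.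
  have := IH (l' :: L') (X `&` ~` A) k; rewrite big_cons; apply.
  + by move: hn => /=; lia.
  + move=> l B [<-|hl] hB; first by apply: (hm (A :: l') B) => //=; [left | right].
    by apply: (hm l B) => //=; right.
  + move=> y [Xy nAy]; have := hc y Xy; rewrite /cnt /=.
    have -> : `[< Ul (A :: l') y >] = `[< Ul l' y >].
      by apply/asboolP/asboolP => /= [[]|] //; right.
    by [].
Qed.

End Count.



Section Misc.
Variable (R : realType).

Lemma esup_bound (f : R -> \bar R) (c : \bar R) (M : R) :
  (forall r, M < r -> (f r <= c)%E) -> (limf_esup f (pinfty_nbhs R) <= c)%E.
Proof.
move=> h; rewrite limf_esupE; apply: ge_ereal_inf.
exists (ereal_sup (f @` [set r | M < r])).
  by exists [set r | M < r] => //; exists M; split => //; exact: num_real.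
by apply: ge_ereal_sup => _ [r hr <-]; exact: h.
Qed.

Lemma pow_bound (x : R) n : 0 <= x -> x <= 1 -> (1 + x) ^+ n <= 1 + 3 ^+ n * x.
Proof.
move=> x0 x1; elim: n => [|n IH]; first by rewrite !expr0 mul1r; lra.
have y1 : 1 <= 3 ^+ n :> R by rewrite exprn_ege1 //; lra.
have p0 : 0 <= (1 + x) ^+ n by rewrite exprn_ge0 //; lra.
rewrite !exprS.
have : (1 + x) * (1 + x) ^+ n <= (1 + x) * (1 + 3 ^+ n * x).
  by apply: ler_wpM2l => //; rewrite addr_ge0.
move=> h; apply: (le_trans h).
have e : (1 + x) * (1 + 3 ^+ n * x) = 1 + x + 3 ^+ n * x + 3 ^+ n * (x * x) by ring.
rewrite e.
have : 3 ^+ n * (x * x) <= 3 ^+ n * x by rewrite ler_wpM2l ?mulr_ge0 // ?ler_piMr //; lra.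
have : x <= 3 ^+ n * x by rewrite ler_peMl.
lra.
Qed.

Lemma ratio_bound (Y Z : \bar R) (B n : R) : 0 <= B -> 0 < n ->
  (0 <= Z)%E -> (Z <= Y)%E -> (n%:E * Z <= B%:E * Y)%E ->
  fine Z / fine Y <= B / n.
Proof.
move=> B0 n0 Z0 ZY h.
have bn : 0 <= B / n by rewrite divr_ge0 // ltW.
case: Y ZY h => [y| |] ZY h; last 2 first.
- by rewrite /= invr0 mulr0.
- by rewrite /= invr0 mulr0.
case: Z Z0 ZY h => [z| |] //= Z0 ZY h.
rewrite lee_fin in Z0; rewrite lee_fin in ZY; rewrite -!EFinM lee_fin in h.
have [y0|ynz] := eqVneq y 0; first by rewrite y0 invr0 mulr0.
have yp : 0 < y by rewrite lt_neqAle eq_sym ynz /=; exact: le_trans ZY.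
rewrite ler_pdivrMr // mulrAC ler_pdivlMr //; lra.
Qed.

End Misc.



Section More.
Variable (R : realType).

Lemma lo0 (A : set 'rV[R]_0) : leb_outer A = +oo%E.
Proof.
apply/eqP; rewrite eq_le leey /=; apply: le_ereal_inf_tmp => _ [ab _ <-].
set u := (\sum_(0 <= k <oo) _)%E.
have hn : forall n : nat, (n%:R%:E <= u)%E.
  move=> n; apply: le_trans (nneseries_lim_ge n _); last first.
    by move=> i _ _; rewrite lee_fin box_vol_ge0.
  rewrite /box_vol; under eq_bigr do rewrite big_ord0.
  by rewrite sumEFin sumr_const_nat subn0.
move: hn; case: u => [r| |] //= hn.
- by have := hn (Num.truncn r).+1; rewrite lee_fin leNgt truncnS_gt.
- by have := hn 0%N.
Qed.

Variable (d : nat).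
Local Notation pt := 'rV[R]_d.

Lemma Ul_map (T : eqType) (g : T -> set pt) s x :
  Ul (map g s) x <-> exists2 i, i \in s & g i x.
Proof.
elim: s => [|b s IH] /=; first by split => // [[]].
split.
- case=> [h|/IH [i hi gi]]; first by exists b; rewrite ?mem_head.
  by exists i; rewrite // in_cons hi orbT.
- case=> i; rewrite in_cons => /orP [/eqP ->|hi] gi; first by left.
  by right; apply/IH; exists i.
Qed.

Lemma In_map (T U : Type) (f : T -> U) s y : List.In y (map f s) -> exists x, y = f x.
Proof.
elim: s => [|b s IH] //= [<-|h]; first by exists b.
exact: IH.
Qed.

Lemma sum_cst (T : Type) (s : seq T) (x : \bar R) : (0 <= x)%E ->
  (\sum_(v <- s) x = (size s)%:R%:E * x)%E.
Proof.
move=> x0; elim: s => [|b s IH]; first by rewrite big_nil mul0e.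
by rewrite big_cons IH /= -natr1 EFinD ge0_muleDl ?lee_fin ?ler0n // mul1e addeC.
Qed.

End More.

Unset Implicit Arguments. Set Strict Implicit.

Theorem theorem8 (R : realType) (d : nat) (V : {fset 'rV[R]_d})
    (E : 'rV[R]_d -> 'rV[R]_d -> Prop) (k : nat) (nu0 : R) :
  distance_graph V E ->
  0 < nu0 < 1 ->
  (forall V' : {fset 'rV[R]_d}, fsubset V' V ->
     (Num.truncn (nu0 * (#|` V|)%fset%:R) <= (#|` V'|)%fset)%N ->
     (k < chromatic_number V' E)%N) ->
  forall S : 'I_k -> set 'rV[R]_d,
    (forall i, leb_measurable (S i)) ->
    (nu0%:E <= upper_density (\bigcup_(i in setT) S i))%E ->
  forall a : R, 0 < a ->
    exists i : 'I_k, exists x y : 'rV[R]_d, S i x /\ S i y /\ eucl_dist x y = a.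
Proof.
move=> [Esym Eprop] /andP[nu0p nu01] Hchi S Smeas Hdens a a0.
apply: contrapT => Hno.
set SS := \bigcup_(i in setT) S i in Hdens.
have [d0|dpos] := posnP d.
  subst d; move: Hdens; apply/negP; rewrite -ltNge.
  apply: (@le_lt_trans _ _ 0%E); last by rewrite lte_fin.
  apply: (esup_bound (M := 0)) => r _.
  by rewrite !lo0 /= invr0 mulr0.
set n := #|` V|%fset.
set m := Num.truncn (nu0 * n%:R).
have Hcount : forall t : 'rV[R]_d,
    (count (fun v : 'rV[R]_d => `[< SS (t + a *: v)%R >]) V < m)%N.
  move=> t; rewrite ltnNge; apply/negP => hm.
  set V' := seq_fset tt (seq.filter (fun v : 'rV[R]_d => `[< SS (t + a *: v)%R >]) V).
  have cardV' : #|` V'|%fset = count (fun v : 'rV[R]_d => `[< SS (t + a *: v)%R >]) V.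
    by rewrite size_seq_fset undup_id ?filter_uniq ?fset_uniq // size_filter.
  have sub : fsubset V' V.
    by apply/fsubsetP => x; rewrite seq_fsetE mem_filter => /andP[].
  have hk := Hchi V' sub; rewrite cardV' in hk; have {hk} hk := hk hm.
  pose f := fun v => match pselect (exists i : 'I_k, S i (t + a *: v)%R) with
                     | left h => val (projT1 (cid h)) | right _ => 0%N end.
  have inV' : forall x, x \in V' -> exists i : 'I_k, S i (t + a *: x).
    by move=> x; rewrite seq_fsetE mem_filter => /andP[/asboolP [i _ Si] _]; exists i.
  have colV' : colorable V' E k.
    exists f; split.
      move=> x /inV' hx; rewrite /f; case: pselect => [h|//]; exact: ltn_ord.
    move=> x y /inV' hx /inV' hy xy Exy; rewrite /f.
    case: pselect => [{}hx|//]; case: pselect => [{}hy|//] /val_inj eqij.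
    apply: Hno; exists (projT1 (cid hx)), (t + a *: x), (t + a *: y).
    split; first exact: (projT2 (cid hx)).
    split; first by rewrite eqij; exact: (projT2 (cid hy)).
    have [_ _ dxy] := Eprop x y Exy.
    rewrite /eucl_dist [t + _]addrC addrKA -scalerBr normZ gtr0_norm //.
    by move: dxy; rewrite /eucl_dist => ->; rewrite mulr1.
  have : (chromatic_number V' E <= k)%N.
    by rewrite /chromatic_number; case: ex_minnP => c _ hmin; apply: hmin; exact/asboolP.
  by rewrite leqNgt hk.
have m1 : (0 < m)%N := leq_ltn_trans (leq0n _) (Hcount 0).
have mle : m%:R <= nu0 * n%:R by rewrite truncn_le mulr_ge0 // ltW.
have npos : (0 < n)%N.
  rewrite lt0n; apply/negP => /eqP n0; move: mle; rewrite n0 mulr0 => h.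
  have : (0 < m%:R :> R) by rewrite ltr0n.
  lra.
set q := (m.-1)%:R / n%:R : R.
have q0 : 0 <= q by rewrite divr_ge0.
have qlt : q < nu0.
  rewrite /q ltr_pdivrMr ?ltr0n //.
  have e : (m.-1)%:R + 1 = m%:R :> R by rewrite natr1 prednK.
  have : (0 < n%:R :> R) by rewrite ltr0n.
  nra.
set c := a * \sum_(v <- V) eucl_norm v.
have cv : forall v, v \in V -> a * eucl_norm v <= c.
  move=> v vV; rewrite /c; apply: ler_wpM2l; first exact: ltW.
  rewrite (big_rem v vV) /= lerDl.
  by apply: sumr_ge0 => ? _; exact: norm_ge0.
have c0 : 0 <= c by apply: mulr_ge0; [exact: ltW | apply: sumr_ge0 => ? _; exact: norm_ge0].
have key : forall R0 : R, 0 < R0 ->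
    fine (leb_outer (SS `&` (@eball R d R0))) / fine (leb_outer (@eball R d R0))
      <= q * ((R0 + c) / R0) ^+ d.
  move=> R0 R0p.
  set s := (R0 + c) / R0.
  have s0 : 0 < s by rewrite divr_gt0 //; lra.
  have hUl : forall v x, Ul (map (fun i => shft (- (a *: v)) (S i)) (enum 'I_k)) x
                         <-> SS (x + a *: v).
    move=> v x; split.
      by move=> /Ul_map [i _]; rewrite /shft opprK => Si; exists i.
    by move=> [i _ Si]; apply/Ul_map; exists i; rewrite ?mem_enum // /shft opprK.
  have h1 : (n%:R%:E * leb_outer (SS `&` (@eball R d R0))
             <= (m.-1)%:R%:E * leb_outer ((@eball R d (R0 + c))))%E.
    set L := map (fun v => map (fun i => shft (- (a *: v)) (S i)) (enum 'I_k)) V.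
    have hmeas : forall l A, List.In l L -> List.In A l -> leb_measurable A.
      move=> l A; rewrite /L => hl hA; have [v ev] := In_map hl; subst l.
      by have [i ei] := In_map hA; subst A; exact/meas_shift/Smeas.
    have hcnt : forall x, (@eball R d (R0 + c)) x -> (cnt L x <= m.-1)%N.
      move=> x _; rewrite /cnt count_map.
      have -> : count (preim (fun v => map (fun i => shft (- (a *: v)) (S i)) (enum 'I_k))
                  (fun l => `[< Ul l x >])) V
                = count (fun v : 'rV[R]_d => `[< SS (x + a *: v)%R >]) V.
        by apply: eq_count => v /=; apply: asbool_equiv_eq; exact: hUl.
      have := Hcount x; lia.
    have := counting_lemma (lo_set0 R dpos) (ltnSn _) hmeas hcnt.
    move=> hc; apply: le_trans hc.
    rewrite big_map (_ : n%:R%:E * _ = \sum_(v <- V) leb_outer (SS `&` (@eball R d R0)))%E;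
      last by rewrite sum_cst ?lo_ge0.
    rewrite !big_seq; apply: lee_sum => v vV.
    rewrite -(lo_shift (- (a *: v))); apply: lo_mono => y.
    move=> hy; have [SSy By] : SS (y + a *: v) /\ (@eball R d R0) (y + a *: v).
      by move: hy; rewrite /shft opprK.
    split; last by apply/hUl.
    have e : y = (y + a *: v) + (- (a *: v)) by rewrite addrK.
    rewrite /eball /= e; apply: le_trans (normD _ _) _.
    rewrite -scaleNr normZ normrN gtr0_norm //; have := cv v vV; move: By; rewrite /eball /=; lra.
  have h2 : (leb_outer ((@eball R d (R0 + c))) <= (s ^+ d)%:E * leb_outer ((@eball R d R0)))%E.
    have -> : R0 + c = s * R0 by rewrite /s divfK // gt_eqF.
    by rewrite eball_scl //; exact: lo_scl.
  have := @ratio_bound R (leb_outer ((@eball R d R0))) (leb_outer (SS `&` (@eball R d R0)))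
    ((m.-1)%:R * s ^+ d) n%:R.
  rewrite -mulrA (mulrC (s ^+ d)) mulrA mulrAC; apply.
  - by rewrite mulr_ge0 ?ler0n // exprn_ge0 // ltW.
  - by rewrite ltr0n.
  - exact: lo_ge0.
  - by apply: lo_mono => x [].
  - apply: le_trans h1 _; rewrite EFinM -muleA; apply: lee_wpmul2l; last exact: h2.
    by rewrite lee_fin ler0n.
set eps := (nu0 - q) / 2.
have eps0 : 0 < eps by rewrite /eps; lra.
have hup : (upper_density SS <= (q + eps)%:E)%E.
  rewrite /upper_density; apply: (esup_bound (M := 1 + c + q * 3 ^+ d * c / eps)) => r hr.
  rewrite lee_fin.
  have T0 : 0 <= q * 3 ^+ d * c / eps.
    apply: divr_ge0; last exact: ltW.
    by apply: mulr_ge0 => //; apply: mulr_ge0 => //; exact: exprn_ge0.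
  have r0 : 0 < r by lra.
  apply: le_trans (key r r0) _.
  have sE : (r + c) / r = 1 + c / r by rewrite mulrDl divff // gt_eqF.
  rewrite sE.
  have cr : c / r <= 1 by rewrite ler_pdivrMr // mul1r; lra.
  have hp := pow_bound d (divr_ge0 c0 (ltW r0)) cr.
  apply: le_trans (ler_wpM2l q0 hp) _.
  have h3 : q * 3 ^+ d * c < r * eps by rewrite -ltr_pdivrMr //; lra.
  have h4 : q * 3 ^+ d * c / r <= eps.
    by rewrite ler_pdivrMr // (mulrC eps); exact: ltW.
  have -> : q * (1 + 3 ^+ d * (c / r)) = q + q * 3 ^+ d * c / r by ring.
  lra.
have := le_trans Hdens hup; rewrite lee_fin /eps => h; lra.
Qed.
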